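(* Let $\mu_1\in\mathcal C^1(\mathbb R_+)$ satisfy $\mu_1(0)=0$, $\lim_{s\to\infty}\mu_1(s)=m_1$ and $\mu_1'(s)>0$ for all $s>0$. Let $\alpha\in(0,1)$, $k_1>0$, $D_2>0$, $S_1^{\mathrm{in}}>0$, and let $X_1^{1*}>0$ satisfy $X_1^{1*}<S_1^{\mathrm{in}}/(\alpha k_1)$. Define $f_1(x)=\mu_1(S_1^{\mathrm{in}}-\alpha k_1x)$ for $x\in[0,S_1^{\mathrm{in}}/(\alpha k_1)]$ and $g_1(x)=\alpha D_2\,\frac{x-X_1^{1*}}{x}$ for $x>0$. Then the equation $f_1(x)=g_1(x)$ has a unique solution $X_1^{2*}$ in the interval $(X_1^{1*},S_1^{\mathrm{in}}/(\alpha k_1))$.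
   Context: In the paper, $X_1^{1*}=(S_1^{\mathrm{in}}-\lambda_1^1)/(\alpha k_1)$ is the first-bioreactor biomass component of an equilibrium with $S_1^{\mathrm{in}}>\lambda_1^1$, where $\lambda_1^1$ solves $\mu_1(S)=\alpha D_1$; in particular $X_1^{1*}>0$. *)

(* Defs.v *)
From Stdlib Require Import Reals.
From Coquelicot Require Import Coquelicot.
Open Scope R_scope.

(* mu is C^1 on R_+ = [0, +oo): there is dmu with
   - dmu s the derivative of mu at every s > 0,
   - dmu 0 the right derivative of mu at 0,
   - dmu continuous on [0, +oo) (right-continuous at 0).
   Values of mu at negative arguments are irrelevant. *)
Definition C1_Rplus (mu : R -> R) : Prop :=
  exists dmu : R -> R,
    (forall s, 0 < s -> is_derive mu s (dmu s)) /\
    filterlim (fun h => (mu (0 + h) - mu 0) / h) (at_right 0) (locally (dmu 0)) /\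
    (forall s, 0 < s -> continuous dmu s) /\
    filterlim dmu (at_right 0) (locally (dmu 0)).

Definition f1 (mu : R -> R) (Sin alpha k1 : R) (x : R) : R :=
  mu (Sin - alpha * k1 * x).

Definition g1 (alpha D2 X11 : R) (x : R) : R :=
  alpha * D2 * ((x - X11) / x).

(* Main.v *)
Require Import Defs.
From Stdlib Require Import Reals Lra.
From Coquelicot Require Import Coquelicot.
Open Scope R_scope.

Lemma rcont0 (mu : R -> R) : C1_Rplus mu -> mu 0 = 0 ->
  forall c, 0 < c -> exists d, 0 < d /\ forall u, 0 < u < d -> Rabs (mu u) < c.
Proof.
  intros [dmu [_ [Hq _]]] H0 c Hc.
  apply filterlim_locally with (eps := mkposreal 1 Rlt_0_1) in Hq.
  destruct Hq as [[d1 Hd1] Hd].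
  set (K := Rabs (dmu 0) + 1).
  assert (HK : 0 < K) by (unfold K; pose proof (Rabs_pos (dmu 0)); lra).
  exists (Rmin d1 (c / K)). split.
  { apply Rmin_glb_lt; [exact Hd1| apply Rdiv_lt_0_compat; lra]. }
  intros u [Hu1 Hu2].
  assert (Hb : ball 0 d1 u).
  { unfold ball; simpl; unfold AbsRing_ball, abs, minus, plus, opp; simpl.
    rewrite Ropp_0, Rplus_0_r, Rabs_right by lra.
    pose proof (Rmin_l d1 (c/K)); simpl in *; lra. }
  specialize (Hd u Hb Hu1).
  unfold ball in Hd; simpl in Hd; unfold AbsRing_ball, abs, minus, plus, opp in Hd; simpl in Hd.
  rewrite H0, Rplus_0_l, Rminus_0_r in Hd.
  assert (Hq: Rabs (mu u / u) < K).
  { unfold K. pose proof (Rabs_triang (mu u / u + - dmu 0) (dmu 0)).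
    replace (mu u / u + - dmu 0 + dmu 0) with (mu u / u) in H by ring. lra. }
  assert (Hm : mu u = (mu u / u) * u) by (field; lra).
  rewrite Hm, Rabs_mult, (Rabs_right u) by lra.
  assert (u < c / K) by (pose proof (Rmin_r d1 (c/K)); lra).
  apply Rle_lt_trans with (K * u).
  { apply Rmult_le_compat_r; lra. }
  apply Rmult_lt_reg_r with (/ K). apply Rinv_0_lt_compat; lra.
  replace (K * u * / K) with u by (field; lra). unfold Rdiv in H. 
  replace (c * / K) with (c / K) by reflexivity. lra.
Qed.

Lemma mu_cont (mu : R -> R) (dmu : R -> R) :
  (forall s, 0 < s -> is_derive mu s (dmu s) /\ dmu s > 0) ->
  forall s, 0 < s -> continuity_pt mu s.
Proof.
  intros H s Hs. apply continuity_pt_filterlim.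
  apply (ex_derive_continuous (K:=R_AbsRing) (V:=R_NormedModule)). exists (dmu s). apply H, Hs.
Qed.

Lemma mu_strict (mu : R -> R) (dmu : R -> R) :
  (forall s, 0 < s -> is_derive mu s (dmu s) /\ dmu s > 0) ->
  forall a b, 0 < a -> a < b -> mu a < mu b.
Proof.
  intros H a b Ha Hab.
  destruct (MVT_gen mu a b dmu) as [c [Hc Heq]].
  - intros x Hx. rewrite Rmin_left, Rmax_right in Hx by lra. apply H; lra.
  - intros x Hx. rewrite Rmin_left, Rmax_right in Hx by lra. apply (mu_cont mu dmu H); lra.
  - rewrite Rmin_left, Rmax_right in Hc by lra.
    assert (dmu c > 0) by (apply H; lra).
    assert (dmu c * (b - a) > 0) by (apply Rmult_gt_0_compat; lra). lra.
Qed.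

Theorem lemma1 (mu : R -> R) (m1 alpha k1 D2 Sin X11 : R)
  (Hmu_C1 : C1_Rplus mu)
  (Hmu0 : mu 0 = 0)
  (Hmu_lim : is_lim mu p_infty m1)
  (Hmu_incr : exists dmu : R -> R,
      forall s, 0 < s -> is_derive mu s (dmu s) /\ dmu s > 0)
  (Halpha : 0 < alpha < 1) (Hk1 : 0 < k1) (HD2 : 0 < D2) (HSin : 0 < Sin)
  (HX11 : 0 < X11) (HX11lt : X11 < Sin / (alpha * k1)) :
  exists! x : R, X11 < x < Sin / (alpha * k1) /\
                 f1 mu Sin alpha k1 x = g1 alpha D2 X11 x.
Proof.
  destruct Hmu_incr as [dmu Hd].
  set (L := Sin / (alpha * k1)) in *.
  assert (Hak : 0 < alpha * k1) by (apply Rmult_lt_0_compat; lra).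
  assert (HL : alpha * k1 * L = Sin) by (unfold L; field; lra).
  assert (Hpos : forall x, x < L -> 0 < Sin - alpha * k1 * x).
  { intros x Hx. assert (alpha * k1 * x < alpha * k1 * L) by (apply Rmult_lt_compat_l; lra). lra. }
  assert (Hnn : forall t, 0 < t -> 0 <= mu t).
  { intros t Ht. destruct (Rle_or_lt 0 (mu t)) as [|Hn]; [assumption|].
    destruct (rcont0 mu Hmu_C1 Hmu0 (- mu t)) as [d [Hd0 Hdd]]; [lra|].
    set (u := Rmin (d/2) (t/2)).
    assert (0 < u < d) by (unfold u; split; [apply Rmin_glb_lt; lra| pose proof (Rmin_l (d/2) (t/2)); lra]).
    assert (u < t) by (unfold u; pose proof (Rmin_r (d/2) (t/2)); lra).
    specialize (Hdd u H). pose proof (mu_strict mu dmu Hd u t ltac:(lra) H0).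
    apply Rabs_def2 in Hdd. lra. }
  assert (Hp : forall t, 0 < t -> 0 < mu t).
  { intros t Ht. pose proof (Hnn (t/2) ltac:(lra)). pose proof (mu_strict mu dmu Hd (t/2) t ltac:(lra) ltac:(lra)). lra. }
  assert (Hg : forall x y, 0 < x -> x < y -> g1 alpha D2 X11 x < g1 alpha D2 X11 y).
  { intros x y Hx Hxy. unfold g1. apply Rmult_lt_compat_l. apply Rmult_lt_0_compat; lra.
    apply Rminus_gt_0_lt.
    replace ((y - X11) / y - (x - X11) / x) with (X11 * (y - x) / (x * y)) by (field; lra).
    apply Rdiv_lt_0_compat. apply Rmult_lt_0_compat; lra. apply Rmult_lt_0_compat; lra. }
  assert (Hf : forall x y, x < y -> y < L -> f1 mu Sin alpha k1 y < f1 mu Sin alpha k1 x).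
  { intros x y Hxy HyL. unfold f1. apply (mu_strict mu dmu Hd). apply Hpos; lra.
    assert (alpha * k1 * x < alpha * k1 * y) by (apply Rmult_lt_compat_l; lra). lra. }
  set (m := (X11 + L) / 2).
  set (c := g1 alpha D2 X11 m).
  assert (Hc : 0 < c).
  { unfold c, g1, m. apply Rmult_lt_0_compat. apply Rmult_lt_0_compat; lra.
    apply Rdiv_lt_0_compat; lra. }
  destruct (rcont0 mu Hmu_C1 Hmu0 c Hc) as [d [Hd0 Hdd]].
  set (s := Rmin (d/2) ((Sin - alpha * k1 * m)/2)).
  assert (Hm0 : 0 < Sin - alpha * k1 * m) by (apply Hpos; unfold m; lra).
  assert (Hs : 0 < s < d /\ s < Sin - alpha * k1 * m).
  { unfold s. pose proof (Rmin_l (d/2) ((Sin - alpha * k1 * m)/2)).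
    pose proof (Rmin_r (d/2) ((Sin - alpha * k1 * m)/2)).
    split; [split|]; try lra. apply Rmin_glb_lt; lra. }
  set (b := (Sin - s) / (alpha * k1)).
  assert (Hb : Sin - alpha * k1 * b = s) by (unfold b; field; lra).
  assert (HbL : m < b < L).
  { split.
    - apply Rmult_lt_reg_l with (alpha * k1); lra.
    - apply Rmult_lt_reg_l with (alpha * k1); lra. }
  assert (HmX : X11 < m < L) by (unfold m; lra).
  set (H := fun x => g1 alpha D2 X11 x - f1 mu Sin alpha k1 x).
  destruct (Ranalysis5.IVT_interv H X11 b) as [z [Hz Hz0]].
  - intros a Ha. unfold H. apply continuity_pt_minus.
    + unfold g1. apply continuity_pt_mult. apply continuity_pt_const. intros ? ?; reflexivity.
      apply continuity_pt_div. apply continuity_pt_minus. apply continuity_pt_id.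
      apply continuity_pt_const. intros ? ?; reflexivity. apply continuity_pt_id. lra.
    + unfold f1. apply continuity_pt_filterlim.
      apply (continuous_comp (fun x => Sin - alpha * k1 * x) mu).
      apply continuity_pt_filterlim. apply continuity_pt_minus. apply continuity_pt_const. intros ? ?; reflexivity.
      apply continuity_pt_mult. apply continuity_pt_const. intros ? ?; reflexivity. apply continuity_pt_id.
      apply continuity_pt_filterlim. apply (mu_cont mu dmu Hd). apply Hpos; lra.
  - lra.
  - unfold H, g1, f1. replace ((X11 - X11) / X11) with 0 by (field; lra).
    pose proof (Hp (Sin - alpha * k1 * X11) (Hpos X11 ltac:(lra))). lra.
  - unfold H, f1. rewrite Hb. specialize (Hdd s ltac:(lra)). apply Rabs_def2 in Hdd.
    pose proof (Hg m b ltac:(lra) ltac:(lra)). fold c in H0. lra.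
  - assert (Hzx : z <> X11).
    { intro E. subst z. unfold H, g1, f1 in Hz0. replace ((X11 - X11) / X11) with 0 in Hz0 by (field; lra).
      pose proof (Hp (Sin - alpha * k1 * X11) (Hpos X11 ltac:(lra))). lra. }
    exists z. split.
    + split; [lra|]. unfold H in Hz0. lra.
    + intros y [Hy Hy0].
      destruct (Rtotal_order z y) as [Hlt|[Heq|Hgt]]; [|exact Heq|].
      * pose proof (Hg z y ltac:(lra) Hlt). pose proof (Hf z y Hlt ltac:(lra)). unfold H in Hz0. lra.
      * pose proof (Hg y z ltac:(lra) Hgt). pose proof (Hf y z Hgt ltac:(lra)). unfold H in Hz0. lra.
Qed.
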